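(* Let $D \ge 1$, $x \in [0,1]^D$, and $s_d = 2^d$ for $d = 0, \ldots, D-1$. Consider the following procedure: initialize the lists $\mathtt{indices} = [0]$ and $\mathtt{weights} = [1]$; for $d = 0$ to $D-1$, and for each $k = 0$ to $2^d - 1$ (in this order): append $s_d + \mathtt{indices}[k]$ to $\mathtt{indices}$, append $x[d]\cdot \mathtt{weights}[k]$ to $\mathtt{weights}$, and then replace $\mathtt{weights}[k]$ by $(1 - x[d])\cdot \mathtt{weights}[k]$; finally return $\mathtt{indices}$ and $\mathtt{weights}$. Then the returned lists each have length $2^D$ and, for every $k = 0, 1, \ldots, 2^D - 1$ (lists indexed from $0$), $$\mathtt{indices}[k] = \sum_{d=0}^{D-1} \mathrm{bit}_d(k)\, s_d, \qquad \mathtt{weights}[k] = \prod_{d=0}^{D-1}\Big( (1 - \mathrm{bit}_d(k))(1 - x[d]) + \mathrm{bit}_d(k)\, x[d] \Big),$$ where $\mathrm{bit}_d(k) \in \{0,1\}$ is the $d$th bit of the binary expansion of $k$. That is, the procedure returns the indices of the $2^D$ vertices of the unit cell $[0,1]^D$ (vertex $v \in \{0,1\}^D$ indexed by $\sum_d v[d] 2^d$) together with their multilinear interpolation weights at $x$.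
   Context: $x[d]$ denotes the $d$th coordinate of $x$ (coordinates indexed $0,\ldots,D-1$). The lattice parameters of a $2^D$ lattice are indexed so that the vertex $v\in\{0,1\}^D$ has index $\sum_d v[d]2^d$; thus $s_d = 2^d$ is the difference of indices of two vertices adjacent in the $d$th dimension. The multilinear interpolation weight of vertex $v$ at $x$ is $\prod_d x[d]^{v[d]}(1-x[d])^{1-v[d]}$. Lists are appended to at the end, and the index $k$ in the inner loop refers to positions $0,\ldots,2^d-1$ of the lists as they stand. *)

(* Defs.v *)
From mathcomp Require Import all_boot all_order all_algebra.
Set Implicit Arguments. Unset Strict Implicit. Unset Printing Implicit Defensive.
Import Order.TTheory GRing.Theory Num.Theory.
Local Open Scope ring_scope.

Section Procedure.
Variable R : nzRingType.

Definition interp_step (d : nat) (xd : R) (st : seq nat * seq R) (k : nat)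
  : seq nat * seq R :=
  let: (ind, w) := st in
  let ind' := rcons ind (2 ^ d + nth 0%N ind k)%N in
  let w' := rcons w (xd * nth 0 w k) in
  (ind', set_nth 0 w' k ((1 - xd) * nth 0 w k)).

Definition interp_dim (d : nat) (xd : R) (st : seq nat * seq R) :=
  foldl (interp_step d xd) st (iota 0 (2 ^ d)).

Definition interp_proc (D : nat) (x : 'I_D -> R) : seq nat * seq R :=
  foldl (fun st (d : 'I_D) => interp_dim d (x d) st) ([:: 0%N], [:: 1])
        (enum 'I_D).
End Procedure.

Definition bit (d k : nat) : nat := odd (k %/ 2 ^ d).

(* Main.v *)
Require Import Defs.
From mathcomp Require Import all_boot all_order all_algebra.
From mathcomp Require Import zify ring.
Import Order.TTheory GRing.Theory Num.Theory.
Local Open Scope ring_scope.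

Lemma bit_lo d i : (i < 2 ^ d)%N -> bit d i = 0%N.
Proof. by move=> h; rewrite /bit divn_small. Qed.

Lemma bit_hi d j : (j < 2 ^ d)%N -> bit d (2 ^ d + j) = 1%N.
Proof.
move=> h; rewrite /bit divnDl // divnn expn_gt0 /= (divn_small h) //.
Qed.

Lemma bit_mid e d j : (e < d)%N -> bit e (2 ^ d + j) = bit e j.
Proof.
move=> h; rewrite /bit divnDl; last by rewrite dvdn_exp2l // ltnW.
have -> : (2 ^ d = 2 ^ (d - e) * 2 ^ e)%N by rewrite -expnD subnK // ltnW.
rewrite mulnK ?expn_gt0 // oddD oddX /=.
by have -> : (d - e == 0)%N = false by apply/negbTE; rewrite subn_eq0 -ltnNge.
Qed.

Lemma foldl_map_eq (A B C : Type) (f : A -> B -> A) (g : A -> C -> A) (h : C -> B) z s :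
  (forall a c, f a (h c) = g a c) -> foldl f z (map h s) = foldl g z s.
Proof. by move=> H; elim: s z => //= c s IH z; rewrite H IH. Qed.

Lemma iotaS0 n : iota 0 n.+1 = rcons (iota 0 n) n.
Proof. by rewrite -addn1 iotaD add0n cats1. Qed.

Section Main.
Variable R : realFieldType.

Definition gw (X : nat -> R) d k : R :=
  (1 - (bit d k)%:R) * (1 - X d) + (bit d k)%:R * X d.

Lemma inner d (xd : R) (ind0 : seq nat) (w0 : seq R) j :
  size ind0 = (2 ^ d)%N -> size w0 = (2 ^ d)%N -> (j <= 2 ^ d)%N ->
  let st := foldl (interp_step d xd) (ind0, w0) (iota 0 j) in
  [/\ size st.1 = (2 ^ d + j)%N, size st.2 = (2 ^ d + j)%N &
   forall i, (i < 2 ^ d + j)%N ->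
     nth 0%N st.1 i = (if (i < 2 ^ d)%N then nth 0%N ind0 i
                       else 2 ^ d + nth 0%N ind0 (i - 2 ^ d))%N /\
     nth 0 st.2 i = (if (i < j)%N then (1 - xd) * nth 0 w0 i
                     else if (i < 2 ^ d)%N then nth 0 w0 i
                     else xd * nth 0 w0 (i - 2 ^ d))].
Proof.
move=> s1 s2; elim: j => [|j IH] hj.
  rewrite /= addn0 s1 s2; split=> // i hi; rewrite hi; split=> //.
have [z1 z2 z3] := IH (ltnW hj).
rewrite iotaS0 foldl_rcons /=.
case E: (foldl _ _ _) z1 z2 z3 => [ind w] /= z1 z2 z3.
have hj2 : (j < 2 ^ d + j)%N by rewrite -{1}(add0n j) ltn_add2r expn_gt0.
have [e1 e2] := z3 j hj2.
rewrite ltnn hj in e1 e2.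
rewrite size_rcons size_set_nth size_rcons z1 z2.
have -> : maxn j.+1 (2 ^ d + j).+1 = (2 ^ d + j).+1.
  by apply/maxn_idPr; rewrite ltnS leq_addl.
rewrite addnS; split=> // i hi.
rewrite nth_set_nth /= !nth_rcons z1 z2 e1 e2.
case: (ltngtP i (2 ^ d + j)) => hij.
- have [f1 f2] := z3 i hij; rewrite f1 f2; split=> //.
  case: eqP => [->|/eqP ne]; first by rewrite ltnSn.
  have -> : (i < j.+1)%N = (i < j)%N by rewrite ltnS leq_eqVlt (negbTE ne).
  done.
- by move: hi; rewrite ltnS leqNgt hij.
- subst i.
  have -> : ((2 ^ d + j)%N == j) = false by rewrite -{2}(add0n j) eqn_add2r expn_eq0.
  have -> : (2 ^ d + j < 2 ^ d)%N = false by rewrite ltnNge leq_addr.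
  have -> : (2 ^ d + j < j.+1)%N = false.
    by rewrite ltnS leqNgt -{1}(add0n j) ltn_add2r expn_gt0.
  by rewrite addKn.
Qed.

Definition Inv m (X : nat -> R) (st : seq nat * seq R) :=
  [/\ size st.1 = (2 ^ m)%N, size st.2 = (2 ^ m)%N &
   forall k, (k < 2 ^ m)%N ->
     nth 0%N st.1 k = (\sum_(d < m) bit d k * 2 ^ d)%N /\
     nth 0 st.2 k = \prod_(d < m) gw X d k].

Lemma outer m X :
  Inv m X (foldl (fun st d => interp_dim d (X d) st) ([:: 0%N], [:: 1]) (iota 0 m)).
Proof.
elim: m => [|m IH].
  by split=> // k; rewrite expn0 ltnS leqn0 => /eqP ->; rewrite big_ord0 big_ord0.
rewrite iotaS0 foldl_rcons /=.
case: (foldl _ _ _) IH => [ind0 w0] [/= s1 s2 h].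
rewrite /interp_dim.
have [z1 z2 z3] := inner m (X m) ind0 w0 (2 ^ m) s1 s2 (leqnn _).
case: (foldl _ _ _) z1 z2 z3 => [ind w] /= z1 z2 z3.
rewrite /Inv /= expnS mul2n -addnn; split=> // k hk.
have [f1 f2] := z3 k hk; rewrite f1 f2 big_ord_recr big_ord_recr /=.
case: (ltnP k (2 ^ m)) => hkm.
  have [g1 g2] := h k hkm; rewrite g1 g2 bit_lo // mul0n addn0; split=> //.
  by rewrite /gw bit_lo //= subr0 mul1r mul0r addr0 mulrC.
have hk' : (k - 2 ^ m < 2 ^ m)%N by rewrite ltn_subLR.
have [g1 g2] := h _ hk'.
have ek : k = (2 ^ m + (k - 2 ^ m))%N by rewrite subnKC.
have bm : bit m k = 1%N by rewrite ek bit_hi.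
have bi : forall i : 'I_m, bit i k = bit i (k - 2 ^ m).
  by move=> i; rewrite {1}ek bit_mid.
rewrite g1 g2 bm mul1n addnC; split.
  by congr (_ + _)%N; apply: eq_bigr => i _; rewrite bi.
rewrite /gw bm mulr1n subrr mul0r add0r mul1r mulrC; congr (_ * _).
by apply: eq_bigr => i _; rewrite bi.
Qed.

End Main.

Theorem lemma2 (R : realFieldType) (D : nat) (x : 'I_D -> R) :
  (1 <= D)%N ->
  (forall d, 0 <= x d <= 1) ->
  let ind := (interp_proc x).1 in
  let w := (interp_proc x).2 in
  [/\ size ind = (2 ^ D)%N, size w = (2 ^ D)%N &
      forall k : nat, (k < 2 ^ D)%N ->
        nth 0%N ind k = (\sum_(d < D) bit d k * 2 ^ d)%N /\
        nth 0 w k = \prod_(d < D)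
          ((1 - (bit d k)%:R) * (1 - x d) + (bit d k)%:R * x d)].
Proof.
move=> _ _.
pose X : nat -> R := fun n => if (n < D)%N =P true is ReflectT h then x (Ordinal h) else 0.
have HX : forall d : 'I_D, X d = x d.
  move=> [d hd]; rewrite /X; case: eqP => // h; congr x; exact: val_inj.
have E : interp_proc x = foldl (fun st d => interp_dim d (X d) st) ([:: 0%N], [:: 1]) (iota 0 D).
  rewrite /interp_proc -val_enum_ord; symmetry; apply: foldl_map_eq => a c.
  by rewrite HX.
rewrite /= E; have [s1 s2 h] := outer R D X; split=> // k hk.
have [h1 h2] := h k hk; split=> //; rewrite h2.
by apply: eq_bigr => i _; rewrite /gw HX.
Qed.
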